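(* The map $(f,z_1,z_2,z_3,\omega_1,\omega_2)\mapsto(z_1,z_2,z_3,\omega_1,\omega_2)$ is a bijection from $\mathrm{Rat}_2^{\mathrm{tm}}$ onto the open subset of $(S^2)^5$ consisting of the $5$-tuples $(z_1,z_2,z_3,\omega_1,\omega_2)$ such that (a) $\omega_1\neq\omega_2$, and (b) for each $i\neq j$ the cross-ratio $$\frac{(z_i-\omega_1)(z_j-\omega_2)}{(z_j-\omega_1)(z_i-\omega_2)}\in\mathbf C\cup\{\infty\}$$ is well defined and different from $-1$. In other words, a totally marked quadratic rational map is uniquely determined by its fixed points and critical points, and exactly the $5$-tuples satisfying (a) and (b) occur.
   Context: $S^2=\hat{\mathbf C}$ is the Riemann sphere. $\mathrm{Rat}_2^{\mathrm{tm}}$ is the space of $6$-tuples $(f,z_1,z_2,z_3,\omega_1,\omega_2)$ where $f$ is a holomorphic degree-$2$ self-map of $S^2$, $z_1,z_2,z_3$ is an ordered list of the fixed points of $f$ with multiplicity (a double or triple fixed point listed twice or three times), and $\omega_1\neq\omega_2$ is an ordering of the two critical points of $f$. Cross-ratios involving $\infty$ are interpreted in the usual way by omitting the corresponding factors. *)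

(* Defs.v *)
From HB Require Import structures.
From mathcomp Require Import all_boot all_order all_algebra.
From mathcomp Require Import complex.
From mathcomp Require Import reals.
Set Implicit Arguments. Unset Strict Implicit. Unset Printing Implicit Defensive.
Import Order.TTheory GRing.Theory Num.Theory.
Local Open Scope ring_scope.

Section RiemannSphere.
Variable C : fieldType.

(* The Riemann sphere  C ∪ {∞} :  [Some z] is the point z, [None] is ∞. *)
Definition sphere := option C.

(* f : sphere -> sphere is the rational map z |-> p(z)/q(z), where p, q are
   coprime polynomials and deg f = max (deg p) (deg q) = 2 (i.e. size 3). *)
Definition rat2_rep (f : sphere -> sphere) (p q : {poly C}) : Prop :=
  [/\ coprimep p q, maxn (size p) (size q) = 3%N,
      (forall z : C, f (Some z) =
          if q.[z] != 0 then Some (p.[z] / q.[z]) else None) &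
      f None = if q`_2 != 0 then Some (p`_2 / q`_2) else None].

Definition is_rat2 (f : sphere -> sphere) : Prop := exists p q, rat2_rep f p q.

(* Multiplicity of a point w as a fixed point of z |-> p(z)/q(z):
   the order of vanishing at w of (the dehomogenisation of) the cubic form
   X Q(X,Y) - Y P(X,Y), i.e. of  z q(z) - p(z)  at finite w, and
   3 - deg (z q(z) - p(z)) at w = ∞. *)
Definition fixmult (p q : {poly C}) (w : sphere) : nat :=
  let F := 'X * q - p in
  match w with
  | Some a => mup a F
  | None => (4 - size F)%N
  end.

(* reversed (degree <= 2) polynomial: the expression of p in the chart w = 1/z,
   i.e. r(w) = w^2 p(1/w). *)
Definition rev2 (p : {poly C}) : {poly C} := \poly_(i < 3) p`_(2 - i).

(* Critical points: the derivative of the local expression of f, in the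
   charts z (or 1/z near ∞) at the source and w (or 1/w near ∞) at the target,
   vanishes.  With local expression N/D (D nonzero at the point), the
   derivative is (N' D - N D') / D^2. *)
Definition is_critical (p q : {poly C}) (w : sphere) : Prop :=
  match w with
  | Some a =>
      let: (N, D) := if q.[a] != 0 then (p, q) else (q, p) in
      (N^`() * D - N * D^`()).[a] = 0
  | None =>
      let rp := rev2 p in let rq := rev2 q in
      let: (N, D) := if rq.[0] != 0 then (rp, rq) else (rq, rp) in
      (N^`() * D - N * D^`()).[0] = 0
  end.

Definition rat2tm (f : sphere -> sphere) (z1 z2 z3 w1 w2 : sphere) : Prop :=
  exists p q : {poly C},
    [/\ rat2_rep f p q,
        (forall w : sphere, count_mem w [:: z1; z2; z3] = fixmult p q w),
        w1 != w2 &
        (forall w : sphere, is_critical p q w <-> w = w1 \/ w = w2)].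

Definition hom (w : sphere) : C * C :=
  match w with Some z => (z, 1) | None => (1, 0) end.

(* The "difference" (x - y), computed homogeneously as a 2x2 determinant;
   a factor involving ∞ becomes ±1 (the signs cancel in the cross-ratio),
   which is the usual convention of omitting such factors. *)
Definition hdiff (x y : sphere) : C :=
  (hom x).1 * (hom y).2 - (hom x).2 * (hom y).1.

(* The cross-ratio (a - c)(b - d) / ((b - c)(a - d)) as a point of the sphere,
   or [None] when it is not well defined (0/0). *)
Definition cross_ratio (a b c d : sphere) : option sphere :=
  let num := hdiff a c * hdiff b d in
  let den := hdiff b c * hdiff a d in
  if den != 0 then Some (Some (num / den))
  else if num != 0 then Some None else None.

Definition admissible (z1 z2 z3 w1 w2 : sphere) : Prop :=
  w1 != w2 /\
  forall i j : 'I_3, i != j ->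
    let z := nth None [:: z1; z2; z3] in
    exists v : sphere, cross_ratio (z i) (z j) w1 w2 = Some v /\ v <> Some (-1).

End RiemannSphere.

(* Main.v *)
Require Import Defs.
From HB Require Import structures.
From mathcomp Require Import all_boot all_order all_algebra.
From mathcomp Require Import complex.
From mathcomp Require Import reals.
From mathcomp Require Import ring zify.
From Stdlib Require Import FunctionalExtensionality.
Set Implicit Arguments. Unset Strict Implicit. Unset Printing Implicit Defensive.
Import Order.TTheory GRing.Theory Num.Theory.
Local Open Scope ring_scope.

Section Alg. Variable F : fieldType.

Definition Res (p0 p1 p2 q0 q1 q2 : F) : F :=
  (p2*q0 - p0*q2)^+2 - (p2*q1 - p1*q2)*(p1*q0 - p0*q1).
Definition Jh (p0 p1 p2 q0 q1 q2 x y : F) : F :=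
  (p2*q1 - p1*q2)*x^+2 + 2*(p2*q0 - p0*q2)*x*y + (p1*q0 - p0*q1)*y^+2.
Definition Q2 (c0 c1 c2 x y : F) : F := c2*x^+2 + c1*x*y + c0*y^+2.
Definition Pi (c0 c1 c2 a1 b1 a2 b2 : F) : F := -(2*c2*a1*a2) - c1*(a1*b2 + a2*b1) - 2*c0*b1*b2.

(* transformed cubic coefficients of E(a1 V - a2 U, b1 V - b2 U) *)
Definition Kt3 (e0 e1 e2 e3 a1 b1 a2 b2 : F) : F :=
  -(e3*a2^+3 + e2*a2^+2*b2 + e1*a2*b2^+2 + e0*b2^+3).
Definition Kt2 (e0 e1 e2 e3 a1 b1 a2 b2 : F) : F :=
  3*e3*a1*a2^+2 + e2*(a2^+2*b1 + 2*a1*a2*b2) + e1*(a1*b2^+2 + 2*a2*b1*b2) + 3*e0*b1*b2^+2.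
Definition Kt1 (e0 e1 e2 e3 a1 b1 a2 b2 : F) : F :=
  -(3*e3*a1^+2*a2 + e2*(a1^+2*b2 + 2*a1*a2*b1) + e1*(2*a1*b1*b2 + a2*b1^+2) + 3*e0*b1^+2*b2).
Definition Kt0 (e0 e1 e2 e3 a1 b1 a2 b2 : F) : F :=
  e3*a1^+3 + e2*a1^+2*b1 + e1*a1*b1^+2 + e0*b1^+3.

Lemma id_J1 (p0 p1 p2 q0 q1 q2 a1 b1 a2 b2 : F) :
  (a1*b2 - b1*a2) * Jh p0 p1 p2 q0 q1 q2 a1 b1 =
  Pi p0 p1 p2 a1 b1 a2 b2 * Q2 q0 q1 q2 a1 b1 - Q2 p0 p1 p2 a1 b1 * Pi q0 q1 q2 a1 b1 a2 b2.
Proof. rewrite /Jh /Pi /Q2. ring. Qed.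
Lemma id_J2 (p0 p1 p2 q0 q1 q2 a1 b1 a2 b2 : F) :
  (a1*b2 - b1*a2) * Jh p0 p1 p2 q0 q1 q2 a2 b2 =
  Q2 p0 p1 p2 a2 b2 * Pi q0 q1 q2 a1 b1 a2 b2 - Pi p0 p1 p2 a1 b1 a2 b2 * Q2 q0 q1 q2 a2 b2.
Proof. rewrite /Jh /Pi /Q2. ring. Qed.
Lemma id_Res (p0 p1 p2 q0 q1 q2 a1 b1 a2 b2 : F) :
  let al := Q2 p0 p1 p2 a2 b2 in let be := Q2 p0 p1 p2 a1 b1 in let pi := Pi p0 p1 p2 a1 b1 a2 b2 in
  let ga := Q2 q0 q1 q2 a2 b2 in let de := Q2 q0 q1 q2 a1 b1 in let rh := Pi q0 q1 q2 a1 b1 a2 b2 in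
  (al*de - be*ga)^+2 - (al*rh - pi*ga)*(pi*de - be*rh) = (a1*b2 - b1*a2)^+4 * Res p0 p1 p2 q0 q1 q2.
Proof. rewrite /Res /Pi /Q2 /=. ring. Qed.
Lemma id_inv2 (p0 p1 p2 a1 b1 a2 b2 : F) :
  (a1*b2 - b1*a2)^+2 * p2 = Q2 p0 p1 p2 a2 b2 * b1^+2 + Pi p0 p1 p2 a1 b1 a2 b2 * b1 * b2 + Q2 p0 p1 p2 a1 b1 * b2^+2.
Proof. rewrite /Pi /Q2. ring. Qed.
Lemma id_inv1 (p0 p1 p2 a1 b1 a2 b2 : F) :
  (a1*b2 - b1*a2)^+2 * p1 = - 2 * (Q2 p0 p1 p2 a2 b2 * a1 * b1 + Q2 p0 p1 p2 a1 b1 * a2 * b2) - Pi p0 p1 p2 a1 b1 a2 b2 * (a1*b2 + a2*b1).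
Proof. rewrite /Pi /Q2. ring. Qed.
Lemma id_inv0 (p0 p1 p2 a1 b1 a2 b2 : F) :
  (a1*b2 - b1*a2)^+2 * p0 = Q2 p0 p1 p2 a2 b2 * a1^+2 + Pi p0 p1 p2 a1 b1 a2 b2 * a1 * a2 + Q2 p0 p1 p2 a1 b1 * a2^+2.
Proof. rewrite /Pi /Q2. ring. Qed.
Lemma id_K3 (p0 p1 p2 q0 q1 q2 a1 b1 a2 b2 : F) :
  - a2 * Q2 q0 q1 q2 a2 b2 + b2 * Q2 p0 p1 p2 a2 b2 = Kt3 (-p0) (q0 - p1) (q1 - p2) q2 a1 b1 a2 b2.
Proof. rewrite /Kt3 /Q2. ring. Qed.
Lemma id_K2 (p0 p1 p2 q0 q1 q2 a1 b1 a2 b2 : F) :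
  a1 * Q2 q0 q1 q2 a2 b2 - a2 * Pi q0 q1 q2 a1 b1 a2 b2 - b1 * Q2 p0 p1 p2 a2 b2 + b2 * Pi p0 p1 p2 a1 b1 a2 b2
  = Kt2 (-p0) (q0 - p1) (q1 - p2) q2 a1 b1 a2 b2.
Proof. rewrite /Kt2 /Q2 /Pi. ring. Qed.
Lemma id_K1 (p0 p1 p2 q0 q1 q2 a1 b1 a2 b2 : F) :
  a1 * Pi q0 q1 q2 a1 b1 a2 b2 - a2 * Q2 q0 q1 q2 a1 b1 - b1 * Pi p0 p1 p2 a1 b1 a2 b2 + b2 * Q2 p0 p1 p2 a1 b1
  = Kt1 (-p0) (q0 - p1) (q1 - p2) q2 a1 b1 a2 b2.
Proof. rewrite /Kt1 /Q2 /Pi. ring. Qed.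
Lemma id_K0 (p0 p1 p2 q0 q1 q2 a1 b1 a2 b2 : F) :
  a1 * Q2 q0 q1 q2 a1 b1 - b1 * Q2 p0 p1 p2 a1 b1 = Kt0 (-p0) (q0 - p1) (q1 - p2) q2 a1 b1 a2 b2.
Proof. rewrite /Kt0 /Q2. ring. Qed.
Lemma id_T (x1 y1 x2 y2 x3 y3 a1 b1 a2 b2 : F) :
  let u1 := x1*b1 - y1*a1 in let u2 := x2*b1 - y2*a1 in let u3 := x3*b1 - y3*a1 in
  let v1 := x1*b2 - y1*a2 in let v2 := x2*b2 - y2*a2 in let v3 := x3*b2 - y3*a2 in
  let e0 := - (x1*x2*x3) in let e1 := x1*x2*y3 + x1*y2*x3 + y1*x2*x3 in
  let e2 := -(x1*y2*y3 + y1*x2*y3 + y1*y2*x3) in let e3 := y1*y2*y3 in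
  [/\ Kt3 e0 e1 e2 e3 a1 b1 a2 b2 = v1*v2*v3,
      Kt2 e0 e1 e2 e3 a1 b1 a2 b2 = -(v1*v2*u3 + v1*u2*v3 + u1*v2*v3),
      Kt1 e0 e1 e2 e3 a1 b1 a2 b2 = v1*u2*u3 + u1*v2*u3 + u1*u2*v3 &
      Kt0 e0 e1 e2 e3 a1 b1 a2 b2 = -(u1*u2*u3)].
Proof. rewrite /Kt3 /Kt2 /Kt1 /Kt0 /=. split; ring. Qed.
Definition ps2 (k0 k1 k2 k3 a1 b1 a2 b2 : F) := (a1*k3 + a2*k2) * b1^+2 + (a1*k1 + a2*k0) * b2^+2.
Definition ps1 (k0 k1 k2 k3 a1 b1 a2 b2 : F) := - 2 * ((a1*k3 + a2*k2) * a1 * b1 + (a1*k1 + a2*k0) * a2 * b2).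
Definition ps0 (k0 k1 k2 k3 a1 b1 a2 b2 : F) := (a1*k3 + a2*k2) * a1^+2 + (a1*k1 + a2*k0) * a2^+2.
Definition qs2 (k0 k1 k2 k3 a1 b1 a2 b2 : F) := (b1*k3 + b2*k2) * b1^+2 + (b1*k1 + b2*k0) * b2^+2.
Definition qs1 (k0 k1 k2 k3 a1 b1 a2 b2 : F) := - 2 * ((b1*k3 + b2*k2) * a1 * b1 + (b1*k1 + b2*k0) * a2 * b2).
Definition qs0 (k0 k1 k2 k3 a1 b1 a2 b2 : F) := (b1*k3 + b2*k2) * a1^+2 + (b1*k1 + b2*k0) * a2^+2.

Lemma id_exF (e0 e1 e2 e3 a1 b1 a2 b2 : F) :
  let k0 := Kt0 e0 e1 e2 e3 a1 b1 a2 b2 in let k1 := Kt1 e0 e1 e2 e3 a1 b1 a2 b2 in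
  let k2 := Kt2 e0 e1 e2 e3 a1 b1 a2 b2 in let k3 := Kt3 e0 e1 e2 e3 a1 b1 a2 b2 in
  let D := a1*b2 - b1*a2 in
  [/\ - ps0 k0 k1 k2 k3 a1 b1 a2 b2 = D^+3 * e0,
      qs0 k0 k1 k2 k3 a1 b1 a2 b2 - ps1 k0 k1 k2 k3 a1 b1 a2 b2 = D^+3 * e1,
      qs1 k0 k1 k2 k3 a1 b1 a2 b2 - ps2 k0 k1 k2 k3 a1 b1 a2 b2 = D^+3 * e2 &
      qs2 k0 k1 k2 k3 a1 b1 a2 b2 = D^+3 * e3].
Proof. rewrite /ps0 /ps1 /ps2 /qs0 /qs1 /qs2 /Kt0 /Kt1 /Kt2 /Kt3 /=. split; ring. Qed.

Lemma id_exRes (k0 k1 k2 k3 a1 b1 a2 b2 : F) :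
  Res (ps0 k0 k1 k2 k3 a1 b1 a2 b2) (ps1 k0 k1 k2 k3 a1 b1 a2 b2) (ps2 k0 k1 k2 k3 a1 b1 a2 b2)
      (qs0 k0 k1 k2 k3 a1 b1 a2 b2) (qs1 k0 k1 k2 k3 a1 b1 a2 b2) (qs2 k0 k1 k2 k3 a1 b1 a2 b2)
  = (a1*b2 - b1*a2)^+6 * (k3*k0 - k2*k1)^+2.
Proof. rewrite /Res /ps0 /ps1 /ps2 /qs0 /qs1 /qs2. ring. Qed.

Lemma id_exJ (k0 k1 k2 k3 a1 b1 a2 b2 x y : F) :
  Jh (ps0 k0 k1 k2 k3 a1 b1 a2 b2) (ps1 k0 k1 k2 k3 a1 b1 a2 b2) (ps2 k0 k1 k2 k3 a1 b1 a2 b2)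
      (qs0 k0 k1 k2 k3 a1 b1 a2 b2) (qs1 k0 k1 k2 k3 a1 b1 a2 b2) (qs2 k0 k1 k2 k3 a1 b1 a2 b2) x y
  = 2 * (a1*b2 - b1*a2)^+2 * (k3*k0 - k2*k1) * ((x*b1 - y*a1) * (x*b2 - y*a2)).
Proof. rewrite /Jh /ps0 /ps1 /ps2 /qs0 /qs1 /qs2. ring. Qed.

Lemma id_TT (u1 u2 u3 v1 v2 v3 : F) :
  (-(v1*v2*u3 + v1*u2*v3 + u1*v2*v3)) * (v1*u2*u3 + u1*v2*u3 + u1*u2*v3) - (v1*v2*v3) * (-(u1*u2*u3))
  = - ((u1*v2 + u2*v1) * (u1*v3 + u3*v1) * (u2*v3 + u3*v2)).
Proof. ring. Qed.

Lemma stepA (al pi be ga rh de : F) :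
  pi*de - be*rh = 0 -> al*rh - pi*ga = 0 ->
  (al*de - be*ga)^+2 - (al*rh - pi*ga)*(pi*de - be*rh) != 0 ->
  [/\ pi = 0, rh = 0 & al*de - be*ga != 0].
Proof.
move=> h1 h2; rewrite h1 h2 mulr0 subr0 expf_eq0 /= => hn.
have e1 : pi * (al*de - be*ga) = al * (pi*de - be*rh) + be * (al*rh - pi*ga) by ring.
have e2 : rh * (al*de - be*ga) = ga * (pi*de - be*rh) + de * (al*rh - pi*ga) by ring.
rewrite h1 h2 !mulr0 addr0 in e1 e2.
split => //.
  by move/eqP: e1; rewrite mulf_eq0 (negPf hn) orbF => /eqP.
by move/eqP: e2; rewrite mulf_eq0 (negPf hn) orbF => /eqP.
Qed.

Lemma core (p0 p1 p2 q0 q1 q2 a1 b1 a2 b2 c e0 e1 e2 e3 : F) :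
  let D := a1*b2 - b1*a2 in
  let k0 := Kt0 e0 e1 e2 e3 a1 b1 a2 b2 in let k1 := Kt1 e0 e1 e2 e3 a1 b1 a2 b2 in
  let k2 := Kt2 e0 e1 e2 e3 a1 b1 a2 b2 in let k3 := Kt3 e0 e1 e2 e3 a1 b1 a2 b2 in
  D != 0 -> c != 0 -> Res p0 p1 p2 q0 q1 q2 != 0 ->
  Jh p0 p1 p2 q0 q1 q2 a1 b1 = 0 -> Jh p0 p1 p2 q0 q1 q2 a2 b2 = 0 ->
  -p0 = c * e0 -> q0 - p1 = c * e1 -> q1 - p2 = c * e2 -> q2 = c * e3 ->
  k3*k0 - k2*k1 != 0 /\
      D^+3 * p0 = c * ps0 k0 k1 k2 k3 a1 b1 a2 b2 /\
      D^+3 * p1 = c * ps1 k0 k1 k2 k3 a1 b1 a2 b2 /\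
      D^+3 * p2 = c * ps2 k0 k1 k2 k3 a1 b1 a2 b2 /\
      D^+3 * q0 = c * qs0 k0 k1 k2 k3 a1 b1 a2 b2 /\
      D^+3 * q1 = c * qs1 k0 k1 k2 k3 a1 b1 a2 b2 /\
      D^+3 * q2 = c * qs2 k0 k1 k2 k3 a1 b1 a2 b2.
Proof.
move=> D k0 k1 k2 k3 hD hc hR hJ1 hJ2 hF0 hF1 hF2 hF3.
have J1 := id_J1 p0 p1 p2 q0 q1 q2 a1 b1 a2 b2.
have J2 := id_J2 p0 p1 p2 q0 q1 q2 a1 b1 a2 b2.
have RR := id_Res p0 p1 p2 q0 q1 q2 a1 b1 a2 b2.
have I2 := id_inv2 p0 p1 p2 a1 b1 a2 b2. have I1 := id_inv1 p0 p1 p2 a1 b1 a2 b2.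
have I0 := id_inv0 p0 p1 p2 a1 b1 a2 b2. have I2' := id_inv2 q0 q1 q2 a1 b1 a2 b2.
have I1' := id_inv1 q0 q1 q2 a1 b1 a2 b2. have I0' := id_inv0 q0 q1 q2 a1 b1 a2 b2.
have K3 := id_K3 p0 p1 p2 q0 q1 q2 a1 b1 a2 b2. have K2 := id_K2 p0 p1 p2 q0 q1 q2 a1 b1 a2 b2.
have K1 := id_K1 p0 p1 p2 q0 q1 q2 a1 b1 a2 b2. have K0 := id_K0 p0 p1 p2 q0 q1 q2 a1 b1 a2 b2.
move: J1 J2 RR I2 I1 I0 I2' I1' I0' K3 K2 K1 K0.
rewrite /= -/D.
set al := Q2 p0 p1 p2 a2 b2; set be := Q2 p0 p1 p2 a1 b1; set pi := Pi p0 p1 p2 a1 b1 a2 b2.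
set ga := Q2 q0 q1 q2 a2 b2; set de := Q2 q0 q1 q2 a1 b1; set rh := Pi q0 q1 q2 a1 b1 a2 b2.
rewrite hJ1 hJ2 mulr0 => J1 J2 RR.
have hR' : (al*de - be*ga)^+2 - (al*rh - pi*ga)*(pi*de - be*rh) != 0.
  by rewrite RR mulf_neq0 // expf_neq0.
have [hpi hrh hn] := stepA (esym J1) (esym J2) hR'.
move: hn; rewrite hpi hrh => hn I2 I1 I0 I2' I1' I0' K3 K2 K1 K0.
have Kt3E : Kt3 (-p0) (q0 - p1) (q1 - p2) q2 a1 b1 a2 b2 = c * k3 by rewrite hF0 hF1 hF2 hF3 /k3 /Kt3; ring.
have Kt2E : Kt2 (-p0) (q0 - p1) (q1 - p2) q2 a1 b1 a2 b2 = c * k2 by rewrite hF0 hF1 hF2 hF3 /k2 /Kt2; ring.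
have Kt1E : Kt1 (-p0) (q0 - p1) (q1 - p2) q2 a1 b1 a2 b2 = c * k1 by rewrite hF0 hF1 hF2 hF3 /k1 /Kt1; ring.
have Kt0E : Kt0 (-p0) (q0 - p1) (q1 - p2) q2 a1 b1 a2 b2 = c * k0 by rewrite hF0 hF1 hF2 hF3 /k0 /Kt0; ring.
rewrite Kt3E in K3; rewrite Kt2E in K2; rewrite Kt1E in K1; rewrite Kt0E in K0.
have Hal : D * al = c * (a1*k3 + a2*k2).
  have -> : c * (a1*k3 + a2*k2) = a1*(c*k3) + a2*(c*k2) by ring.
  by rewrite -K3 -K2 /D; ring.
have Hga : D * ga = c * (b1*k3 + b2*k2).
  have -> : c * (b1*k3 + b2*k2) = b1*(c*k3) + b2*(c*k2) by ring.
  by rewrite -K3 -K2 /D; ring.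
have Hbe : D * be = c * (a1*k1 + a2*k0).
  have -> : c * (a1*k1 + a2*k0) = a1*(c*k1) + a2*(c*k0) by ring.
  by rewrite -K1 -K0 /D; ring.
have Hde : D * de = c * (b1*k1 + b2*k0).
  have -> : c * (b1*k1 + b2*k0) = b1*(c*k1) + b2*(c*k0) by ring.
  by rewrite -K1 -K0 /D; ring.
have G0 : k3*k0 - k2*k1 != 0.
  have : c^+2 * (k3*k0 - k2*k1) = D * (al*de - be*ga).
    have -> : c^+2 * (k3*k0 - k2*k1) = (c*k3)*(c*k0) - (c*k2)*(c*k1) by ring.
    by rewrite -K3 -K2 -K1 -K0 /D; ring.
  move=> h; apply/negP => /eqP h0; move: h; rewrite h0 mulr0 => /esym/eqP.
  by rewrite mulf_eq0 (negPf hD) (negPf hn).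
have G1 : D^+3 * p0 = c * ps0 k0 k1 k2 k3 a1 b1 a2 b2.
  have -> : D^+3 * p0 = D * (D^+2 * p0) by ring.
  rewrite I0 /ps0 ?mulr0 ?mul0r ?addr0 ?subr0.
  have -> : D * (al * a1 ^+ 2 + be * a2 ^+ 2) = (D*al) * a1^+2 + (D*be)*a2^+2 by ring.
  rewrite Hal Hbe; ring.
have G2 : D^+3 * p1 = c * ps1 k0 k1 k2 k3 a1 b1 a2 b2.
  have -> : D^+3 * p1 = D * (D^+2 * p1) by ring.
  rewrite I1 /ps1 ?mulr0 ?mul0r ?addr0 ?subr0.
  have -> : D * (- 2 * (al * a1 * b1 + be * a2 * b2)) = -2 * ((D*al) * a1 * b1 + (D*be) * a2 * b2) by ring.
  rewrite Hal Hbe; ring.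
have G3 : D^+3 * p2 = c * ps2 k0 k1 k2 k3 a1 b1 a2 b2.
  have -> : D^+3 * p2 = D * (D^+2 * p2) by ring.
  rewrite I2 /ps2 ?mulr0 ?mul0r ?addr0 ?subr0.
  have -> : D * (al * b1 ^+ 2 + be * b2 ^+ 2) = (D*al) * b1^+2 + (D*be)*b2^+2 by ring.
  rewrite Hal Hbe; ring.
have G4 : D^+3 * q0 = c * qs0 k0 k1 k2 k3 a1 b1 a2 b2.
  have -> : D^+3 * q0 = D * (D^+2 * q0) by ring.
  rewrite I0' /qs0 ?mulr0 ?mul0r ?addr0 ?subr0.
  have -> : D * (ga * a1 ^+ 2 + de * a2 ^+ 2) = (D*ga) * a1^+2 + (D*de)*a2^+2 by ring.
  rewrite Hga Hde; ring.
have G5 : D^+3 * q1 = c * qs1 k0 k1 k2 k3 a1 b1 a2 b2.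
  have -> : D^+3 * q1 = D * (D^+2 * q1) by ring.
  rewrite I1' /qs1 ?mulr0 ?mul0r ?addr0 ?subr0.
  have -> : D * (- 2 * (ga * a1 * b1 + de * a2 * b2)) = -2 * ((D*ga) * a1 * b1 + (D*de) * a2 * b2) by ring.
  rewrite Hga Hde; ring.
have G6 : D^+3 * q2 = c * qs2 k0 k1 k2 k3 a1 b1 a2 b2.
  have -> : D^+3 * q2 = D * (D^+2 * q2) by ring.
  rewrite I2' /qs2 ?mulr0 ?mul0r ?addr0 ?subr0.
  have -> : D * (ga * b1 ^+ 2 + de * b2 ^+ 2) = (D*ga) * b1^+2 + (D*de)*b2^+2 by ring.
  rewrite Hga Hde; ring.
by repeat split.
Qed.
End Alg.

Section Bridge.
Variable F : closedFieldType.

Definition P3 (c0 c1 c2 : F) : {poly F} := c0%:P + c1%:P * 'X + c2%:P * 'X^2.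
Definition P4 (c0 c1 c2 c3 : F) : {poly F} := c0%:P + c1%:P * 'X + c2%:P * 'X^2 + c3%:P * 'X^3.

Lemma coefP3 c0 c1 c2 i : (P3 c0 c1 c2)`_i = nth 0 [:: c0; c1; c2] i.
Proof. rewrite /P3 !coefE. case: i => [|[|[|i]]] /=; rewrite ?nth_nil; ring. Qed.
Lemma coefP4 c0 c1 c2 c3 i : (P4 c0 c1 c2 c3)`_i = nth 0 [:: c0; c1; c2; c3] i.
Proof. rewrite /P4 !coefE. case: i => [|[|[|[|i]]]] /=; rewrite ?nth_nil; ring. Qed.

Lemma poly3 (p : {poly F}) : (size p <= 3)%N -> p = P3 p`_0 p`_1 p`_2.
Proof.
move=> hs; apply/polyP => i; rewrite coefP3.
case: i => [|[|[|i]]] //=; rewrite nth_nil nth_default //.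
by apply: (leq_trans hs).
Qed.

Lemma size_P3 c0 c1 c2 : (size (P3 c0 c1 c2) <= 3)%N.
Proof.
have -> : P3 c0 c1 c2 = \poly_(i < 3) nth 0 [:: c0; c1; c2] i.
  apply/polyP => i; rewrite coefP3 coef_poly; case: i => [|[|[|i]]] //=.
  by rewrite nth_nil.
exact: size_poly.
Qed.

Lemma size3 (p : {poly F}) : (size p <= 3)%N -> p`_2 != 0 -> size p = 3%N.
Proof.
move=> hs hc; apply/eqP; rewrite eqn_leq hs /= leqNgt; apply/negP => h.
by move: hc; rewrite nth_default ?eqxx.
Qed.

Lemma P4_inj c0 c1 c2 c3 d0 d1 d2 d3 c :
  P4 c0 c1 c2 c3 = c *: P4 d0 d1 d2 d3 ->
  [/\ c0 = c * d0, c1 = c * d1, c2 = c * d2 & c3 = c * d3].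
Proof.
move=> h.
have e : forall i, (P4 c0 c1 c2 c3)`_i = c * (P4 d0 d1 d2 d3)`_i by move=> i; rewrite h coefZ.
by split; [move: (e 0%N) | move: (e 1%N) | move: (e 2%N) | move: (e 3%N)]; rewrite !coefP4.
Qed.

Lemma fixpolyE c0 c1 c2 d0 d1 d2 :
  'X * P3 d0 d1 d2 - P3 c0 c1 c2 = P4 (- c0) (d0 - c1) (d1 - c2) d2.
Proof. rewrite /P3 /P4 !rmorphB /=. ring. Qed.

Definition lin (z : sphere F) : {poly F} := (Defs.hom z).2%:P * 'X - (Defs.hom z).1%:P.
Definition Epoly (zs : seq (sphere F)) : {poly F} := \prod_(z <- zs) lin z.

Lemma EpolyE z1 z2 z3 :
  let x1 := (Defs.hom z1).1 in let y1 := (Defs.hom z1).2 in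
  let x2 := (Defs.hom z2).1 in let y2 := (Defs.hom z2).2 in
  let x3 := (Defs.hom z3).1 in let y3 := (Defs.hom z3).2 in
  Epoly [:: z1; z2; z3] = P4 (- (x1*x2*x3)) (x1*x2*y3 + x1*y2*x3 + y1*x2*x3)
     (-(x1*y2*y3 + y1*x2*y3 + y1*y2*x3)) (y1*y2*y3).
Proof.
rewrite /Epoly !big_cons big_nil /lin /P4 /=.
ring.
Qed.

Lemma Epoly_split zs :
  Epoly zs = (-1)^+(count_mem None zs) * \prod_(a <- pmap id zs) ('X - a%:P).
Proof.
elim: zs => [|z zs IH]; first by rewrite /Epoly !big_nil expr0 mul1r.
rewrite /Epoly big_cons -/(Epoly zs) IH; case: z => [a|] /=.
  rewrite big_cons /lin /= add0n mul1r; ring.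
by rewrite /lin /= add1n exprS mul0r sub0r; ring.
Qed.

Lemma count_Some a (zs : seq (sphere F)) : count_mem (Some a) zs = count_mem a (pmap id zs).
Proof. by elim: zs => [|[b|] zs IH] //=; rewrite IH. Qed.

Lemma count_None_size (zs : seq (sphere F)) :
  (count_mem None zs + size (pmap id zs))%N = size zs.
Proof. elim: zs => [|[b|] zs IH] //=; rewrite -IH ?add0n ?add1n ?addnS ?addSn //. Qed.

Lemma size_sign_mul n (P : {poly F}) : size ((-1)^+n * P) = size P.
Proof. by rewrite -signr_odd; case: (odd n); rewrite ?expr1 ?expr0 ?mul1r ?mulN1r ?size_opp. Qed.

Lemma root_sign n a : ~~ root ((-1)^+n : {poly F}) a.
Proof. by rewrite /root horner_exp hornerN hornerC expf_neq0 // oppr_eq0 oner_eq0. Qed.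

Lemma fix_back (p q : {poly F}) zs c : c != 0 -> 'X * q - p = c *: Epoly zs -> size zs = 3%N ->
  forall w, count_mem w zs = fixmult p q w.
Proof.
move=> hc hE hs [a|]; rewrite /fixmult hE.
  rewrite -mul_polyC mupMr ?rootC // Epoly_split mupMr ?root_sign //.
  by rewrite mu_prod_XsubC count_Some.
rewrite size_scale // Epoly_split size_sign_mul size_prod_XsubC.
have := count_None_size zs; rewrite hs; lia.
Qed.

Lemma fix_fwd (p q : {poly F}) zs : 'X * q - p != 0 ->
  (forall w, count_mem w zs = fixmult p q w) -> exists c, c != 0 /\ 'X * q - p = c *: Epoly zs.
Proof.
move=> hG hc; set G := 'X * q - p in hG *.
have [rs hrs] := closed_field_poly_normal G.
have hl : lead_coef G != 0 by rewrite lead_coef_eq0.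
have hperm : perm_eq rs (pmap id zs).
  apply/allP => x _ /=; apply/eqP.
  rewrite -count_Some hc /fixmult -/G -mu_prod_XsubC.
  by rewrite hrs -mul_polyC mupMr // rootC.
exists (lead_coef G * (-1)^+(count_mem None zs)); split.
  by rewrite mulf_neq0 // expf_neq0 // oppr_eq0 oner_eq0.
rewrite {1}hrs (perm_big _ hperm) Epoly_split -scalerA; congr (_ *: _).
rewrite -mul_polyC mulrA rmorph_sign -expr2 sqrr_sign mul1r //.
Qed.


Lemma rev2P3 c0 c1 c2 : rev2 (P3 c0 c1 c2) = P3 c2 c1 c0.
Proof.
apply/polyP => i; rewrite /rev2 coef_poly !coefP3.
by case: i => [|[|[|i]]] //=; rewrite nth_nil.
Qed.

Lemma hornerP3 c0 c1 c2 x : (P3 c0 c1 c2).[x] = c0 + c1 * x + c2 * x^+2.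
Proof. by rewrite /P3 !hornerD !hornerCM hornerC hornerX hornerXn. Qed.

Lemma derivP3 c0 c1 c2 : (P3 c0 c1 c2)^`() = P3 c1 (c2 *+ 2) 0.
Proof.
apply/polyP => i; rewrite coef_deriv !coefP3.
case: i => [|[|[|i]]] //=; rewrite ?nth_nil ?mul0rn //.
Qed.

Lemma crit3 c0 c1 c2 d0 d1 d2 w :
  is_critical (P3 c0 c1 c2) (P3 d0 d1 d2) w <-> Jh c0 c1 c2 d0 d1 d2 (Defs.hom w).1 (Defs.hom w).2 = 0.
Proof.
case: w => [a|] /=.
  have E : ((P3 c0 c1 c2)^`() * P3 d0 d1 d2 - P3 c0 c1 c2 * (P3 d0 d1 d2)^`()).[a]
     = Jh c0 c1 c2 d0 d1 d2 a 1.
    rewrite !derivP3 hornerD hornerN !hornerM !hornerP3 /Jh; ring.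
  have E' : ((P3 d0 d1 d2)^`() * P3 c0 c1 c2 - P3 d0 d1 d2 * (P3 c0 c1 c2)^`()).[a]
     = - Jh c0 c1 c2 d0 d1 d2 a 1.
    rewrite !derivP3 hornerD hornerN !hornerM !hornerP3 /Jh; ring.
  case: ifP => _ /=; rewrite ?E ?E' //.
  by split => [/eqP|->]; rewrite ?oppr0 // oppr_eq0 => /eqP.
rewrite !rev2P3.
have E : ((P3 c2 c1 c0)^`() * P3 d2 d1 d0 - P3 c2 c1 c0 * (P3 d2 d1 d0)^`()).[0]
     = - Jh c0 c1 c2 d0 d1 d2 1 0.
  rewrite !derivP3 hornerD hornerN !hornerM !hornerP3 /Jh; ring.
have E' : ((P3 d2 d1 d0)^`() * P3 c2 c1 c0 - P3 d2 d1 d0 * (P3 c2 c1 c0)^`()).[0]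
     = Jh c0 c1 c2 d0 d1 d2 1 0.
  rewrite !derivP3 hornerD hornerN !hornerM !hornerP3 /Jh; ring.
case: ifP => _ /=; rewrite ?E ?E' //.
by split => [/eqP|->]; rewrite ?oppr0 // oppr_eq0 => /eqP.
Qed.

Lemma res_coprime (p q : {poly F}) : (size p <= 3)%N -> (size q <= 3)%N ->
  Res p`_0 p`_1 p`_2 q`_0 q`_1 q`_2 != 0 -> coprimep p q.
Proof.
move=> hp hq hR; apply: Pdiv.ClosedField.root_coprimep => x hx; apply/negP => /eqP hqx.
move: hx; rewrite /root (poly3 hp) hornerP3 => /eqP hpx.
move: hqx; rewrite (poly3 hq) hornerP3 => hqx.
have id : x * Res p`_0 p`_1 p`_2 q`_0 q`_1 q`_2 =
  (- (p`_2*q`_1 - p`_1*q`_2) * q`_0 - (p`_2*q`_0 - p`_0*q`_2) * x * q`_2) * (p`_0 + p`_1 * x + p`_2 * x^+2)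
  + ((p`_2*q`_1 - p`_1*q`_2) * p`_0 + (p`_2*q`_0 - p`_0*q`_2) * x * p`_2) * (q`_0 + q`_1 * x + q`_2 * x^+2).
  rewrite /Res; ring.
rewrite hpx hqx !mulr0 addr0 in id.
have [x0|xn0] := eqVneq x 0.
  have h1 : p`_0 = p`_0 + p`_1 * x + p`_2 * x^+2 by rewrite x0; ring.
  have h2 : q`_0 = q`_0 + q`_1 * x + q`_2 * x^+2 by rewrite x0; ring.
  rewrite hpx in h1; rewrite hqx in h2.
  move: hR; rewrite /Res h1 h2.
  have -> : (p`_2 * 0 - 0 * q`_2) ^+ 2 - (p`_2 * q`_1 - p`_1 * q`_2) * (p`_1 * 0 - 0 * q`_1) = 0 by ring.
  by rewrite eqxx.
by move/eqP: id; rewrite mulf_eq0 (negPf xn0) (negPf hR).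
Qed.

Lemma coprime_res_aux (p q : {poly F}) : (size p <= 3)%N -> (size q <= 3)%N -> q`_2 != 0 ->
  coprimep p q -> Res p`_0 p`_1 p`_2 q`_0 q`_1 q`_2 != 0.
Proof.
move=> hp hq hq2 hcop.
have sq := size3 hq hq2.
have [rs hrs] := closed_field_poly_normal q.
have hl : lead_coef q = q`_2 by rewrite lead_coefE sq.
have srs : size rs = 2%N.
  have : size q = (size rs).+1 by rewrite {1}hrs size_scale ?size_prod_XsubC ?hl.
  by rewrite sq; case.
case: rs hrs srs => [|r1 [|r2 [|]]] //= hrs _.
rewrite hl !big_cons big_nil mulr1 in hrs.
have hq' : q = P3 (q`_2 * (r1 * r2)) (- (q`_2 * (r1 + r2))) q`_2.
  rewrite {1}hrs /P3 -mul_polyC; ring.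
have hq0 : q`_0 = q`_2 * (r1 * r2) by rewrite {1}hq' coefP3.
have hq1 : q`_1 = - (q`_2 * (r1 + r2)) by rewrite {1}hq' coefP3.
have hr1 : q.[r1] = 0 by rewrite hrs hornerZ hornerM !hornerD !hornerN !hornerX !hornerC subrr ?mul0r ?mulr0.
have hr2 : q.[r2] = 0 by rewrite hrs hornerZ hornerM !hornerD !hornerN !hornerX !hornerC subrr ?mul0r ?mulr0.
have Rid : Res p`_0 p`_1 p`_2 q`_0 q`_1 q`_2 =
   q`_2^+2 * ((P3 p`_0 p`_1 p`_2).[r1] * (P3 p`_0 p`_1 p`_2).[r2]).
  rewrite hq0 hq1 !hornerP3 /Res; ring.
rewrite Rid -(poly3 hp) mulf_neq0 ?expf_neq0 // mulf_neq0 //.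
  by apply/negP => /eqP h; have := coprimep_root hcop (x := r1); rewrite /root h eqxx hr1 eqxx => /(_ isT).
by apply/negP => /eqP h; have := coprimep_root hcop (x := r2); rewrite /root h eqxx hr2 eqxx => /(_ isT).
Qed.

Lemma coprime_res (p q : {poly F}) : maxn (size p) (size q) = 3%N ->
  coprimep p q -> Res p`_0 p`_1 p`_2 q`_0 q`_1 q`_2 != 0.
Proof.
move=> hm hcop.
have hp : (size p <= 3)%N by rewrite -hm leq_maxl.
have hq : (size q <= 3)%N by rewrite -hm leq_maxr.
have [hq2|hq2] := eqVneq q`_2 0; last exact: coprime_res_aux.
have sq : (size q <= 2)%N.
  rewrite leqNgt; apply/negP => h.
  have sq3 : size q = 3%N by apply/eqP; rewrite eqn_leq hq h.
  by move: (lead_coef_eq0 q); rewrite lead_coefE sq3 hq2 eqxx => /esym/eqP hq0; move: sq3; rewrite hq0 size_poly0.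
have sp : size p = 3%N.
  by move: hm; rewrite /maxn; case: ltnP => // h; lia.
have hp2 : p`_2 != 0.
  have : lead_coef p != 0 by rewrite lead_coef_eq0 -size_poly_gt0 sp.
  by rewrite lead_coefE sp.
have hcop2 : coprimep q p by rewrite coprimep_sym.
have := coprime_res_aux hq hp hp2 hcop2.
have -> : Res q`_0 q`_1 q`_2 p`_0 p`_1 p`_2 = Res p`_0 p`_1 p`_2 q`_0 q`_1 q`_2 by rewrite /Res; ring.
done.
Qed.


Lemma hdiff_eq0 (w w' : sphere F) : hdiff w w' = 0 <-> w = w'.
Proof.
case: w => [a|]; case: w' => [b|]; rewrite /hdiff /=.
- rewrite mulr1 mul1r; split => [/eqP|[->]]; rewrite ?subrr // subr_eq0 => /eqP -> //.
- by rewrite mulr0 mul1r sub0r; split => // /eqP; rewrite oppr_eq0 oner_eq0.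
- by rewrite mul1r mul0r subr0; split => // /eqP; rewrite oner_eq0.
- by rewrite mulr0 mul0r subrr.
Qed.

Lemma cr_ok (a b c d : sphere F) :
  (hdiff a c * hdiff b d + hdiff b c * hdiff a d != 0) <->
  exists v, cross_ratio a b c d = Some v /\ v <> Some (-1).
Proof.
rewrite /cross_ratio; set num := hdiff a c * hdiff b d; set den := hdiff b c * hdiff a d.
split.
  move=> h; have [hd|hd] := eqVneq den 0.
    have hn : num != 0 by move: h; rewrite hd addr0.
    by exists None; rewrite hd /= hn.
  exists (Some (num / den)); split; first by [].
  move=> [] e; move: h; have -> : num = - den.
    by rewrite -[num](divfK hd) e mulN1r.
  by rewrite addNr eqxx.
move=> [v [hc hv]]; have [hd|hd] := eqVneq den 0.
  move: hc; rewrite hd ?eqxx /= addr0; case: (eqVneq num 0) => //= _; discriminate.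
apply/negP => /eqP e; apply: hv; move: hc; rewrite hd => -[<-].
have -> : num = - den by apply/eqP; rewrite -addr_eq0 e.
by rewrite mulNr divff.
Qed.

Definition Tz (z1 z2 z3 w1 w2 : sphere F) : F :=
  let u1 := hdiff z1 w1 in let u2 := hdiff z2 w1 in let u3 := hdiff z3 w1 in
  let v1 := hdiff z1 w2 in let v2 := hdiff z2 w2 in let v3 := hdiff z3 w2 in
  (u1*v2 + u2*v1) * (u1*v3 + u3*v1) * (u2*v3 + u3*v2).

Lemma adm_iff z1 z2 z3 w1 w2 :
  admissible z1 z2 z3 w1 w2 <-> w1 != w2 /\ Tz z1 z2 z3 w1 w2 != 0.
Proof.
rewrite /admissible /Tz; split.
  move=> [hw h]; split => //.
  have h01 := h (@Ordinal 3 0 isT) (@Ordinal 3 1 isT) isT.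
  have h02 := h (@Ordinal 3 0 isT) (@Ordinal 3 2 isT) isT.
  have h12 := h (@Ordinal 3 1 isT) (@Ordinal 3 2 isT) isT.
  move/cr_ok: h01; move/cr_ok: h02; move/cr_ok: h12 => /= h12 h02 h01.
  by rewrite !mulf_neq0.
move=> [hw hT]; split => //.
move: hT; rewrite !mulf_eq0 !negb_or => /andP [/andP [h01 h02] h12].
move=> [[|[|[|i]]] hi] [[|[|[|j]]] hj] //= _; apply/cr_ok => //=.
- by rewrite addrC.
- by rewrite addrC.
- by rewrite addrC.
Qed.


Section Assembly.
Variables (z1 z2 z3 w1 w2 : sphere F).
Let x1 := (Defs.hom z1).1. Let y1 := (Defs.hom z1).2.
Let x2 := (Defs.hom z2).1. Let y2 := (Defs.hom z2).2.
Let x3 := (Defs.hom z3).1. Let y3 := (Defs.hom z3).2.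
Let a1 := (Defs.hom w1).1. Let b1 := (Defs.hom w1).2.
Let a2 := (Defs.hom w2).1. Let b2 := (Defs.hom w2).2.
Let e0 := - (x1*x2*x3).
Let e1 := x1*x2*y3 + x1*y2*x3 + y1*x2*x3.
Let e2 := -(x1*y2*y3 + y1*x2*y3 + y1*y2*x3).
Let e3 := y1*y2*y3.
Let k0 := Kt0 e0 e1 e2 e3 a1 b1 a2 b2.
Let k1 := Kt1 e0 e1 e2 e3 a1 b1 a2 b2.
Let k2 := Kt2 e0 e1 e2 e3 a1 b1 a2 b2.
Let k3 := Kt3 e0 e1 e2 e3 a1 b1 a2 b2.
Definition Psz := P3 (ps0 k0 k1 k2 k3 a1 b1 a2 b2) (ps1 k0 k1 k2 k3 a1 b1 a2 b2) (ps2 k0 k1 k2 k3 a1 b1 a2 b2).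
Definition Qsz := P3 (qs0 k0 k1 k2 k3 a1 b1 a2 b2) (qs1 k0 k1 k2 k3 a1 b1 a2 b2) (qs2 k0 k1 k2 k3 a1 b1 a2 b2).

Lemma T_k : k3*k0 - k2*k1 = Tz z1 z2 z3 w1 w2.
Proof.
have [h3 h2 h1 h0] := id_T x1 y1 x2 y2 x3 y3 a1 b1 a2 b2.
rewrite /k0 /k1 /k2 /k3 /e0 /e1 /e2 /e3 h3 h2 h1 h0 /Tz /hdiff -/x1 -/y1 -/x2 -/y2 -/x3 -/y3 -/a1 -/b1 -/a2 -/b2.
ring.
Qed.

Lemma D_neq0 : w1 != w2 -> a1 * b2 - b1 * a2 != 0.
Proof. by move=> h; apply/negP => /eqP /hdiff_eq0 e; move: h; rewrite e eqxx. Qed.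

Lemma P3Z mu c0 c1 c2 : mu *: P3 c0 c1 c2 = P3 (mu * c0) (mu * c1) (mu * c2).
Proof. rewrite /P3 -mul_polyC; ring. Qed.
Lemma P4Z mu c0 c1 c2 c3 : mu *: P4 c0 c1 c2 c3 = P4 (mu * c0) (mu * c1) (mu * c2) (mu * c3).
Proof. rewrite /P4 -mul_polyC; ring. Qed.

Lemma analyze f p q : rat2_rep f p q ->
  (forall w, count_mem w [:: z1; z2; z3] = fixmult p q w) -> w1 != w2 ->
  (forall w, is_critical p q w <-> w = w1 \/ w = w2) ->
  Tz z1 z2 z3 w1 w2 != 0 /\ exists mu, mu != 0 /\ p = mu *: Psz /\ q = mu *: Qsz.
Proof.
move=> [hcop hm _ _] hcnt hw hcrit.
have hp : (size p <= 3)%N by rewrite -hm leq_maxl.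
have hq : (size q <= 3)%N by rewrite -hm leq_maxr.
have hR := coprime_res hm hcop.
have hD := D_neq0 hw.
have c1 : is_critical p q w1 by apply/hcrit; left.
have c2 : is_critical p q w2 by apply/hcrit; right.
rewrite (poly3 hp) (poly3 hq) crit3 -/a1 -/b1 in c1.
rewrite (poly3 hp) (poly3 hq) crit3 -/a2 -/b2 in c2.
have hG : 'X * q - p != 0.
  apply/negP => /eqP h0.
  move: h0; rewrite (poly3 hp) (poly3 hq) fixpolyE -(scale0r (P4 0 0 0 0)).
  move=> /P4_inj [f0 f1 f2 f3]; move: hR.
  have -> : p`_0 = 0 by rewrite -[p`_0]opprK f0 mul0r oppr0.
  have -> : q`_2 = 0 by rewrite f3 mul0r.
  have -> : q`_0 = p`_1 by apply/eqP; rewrite -subr_eq0 f1 mul0r.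
  have -> : q`_1 = p`_2 by apply/eqP; rewrite -subr_eq0 f2 mul0r.
  have -> : Res 0 p`_1 p`_2 p`_1 p`_2 0 = 0 by rewrite /Res; ring.
  by rewrite eqxx.
have [c [hc hE]] := fix_fwd hG hcnt.
rewrite EpolyE (poly3 hp) (poly3 hq) fixpolyE in hE; move/P4_inj: hE => [f0 f1 f2 f3].
have := core hD hc hR c1 c2 f0 f1 f2 f3.
rewrite -/e0 -/e1 -/e2 -/e3 -/k0 -/k1 -/k2 -/k3.
move=> [hk [g0 [g1 [g2 [g3 [g4 g5]]]]]].
split; first by rewrite -T_k.
have hD3 : (a1 * b2 - b1 * a2)^+3 != 0 by rewrite expf_neq0.
exists (c / (a1 * b2 - b1 * a2)^+3); split; first by rewrite mulf_neq0 // invr_eq0.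
split.
  apply: (etrans (poly3 hp)); rewrite /Psz P3Z; congr P3; apply: (mulfI hD3).
  - by rewrite g0; field.
  - by rewrite g1; field.
  - by rewrite g2; field.
apply: (etrans (poly3 hq)); rewrite /Qsz P3Z; congr P3; apply: (mulfI hD3).
- by rewrite g3; field.
- by rewrite g4; field.
- by rewrite g5; field.
Qed.

Definition mkf (p q : {poly F}) : sphere F -> sphere F := fun w =>
  match w with
  | Some z => if q.[z] != 0 then Some (p.[z] / q.[z]) else None
  | None => if q`_2 != 0 then Some (p`_2 / q`_2) else None
  end.

Lemma exist_tm : (2 : F) != 0 -> w1 != w2 -> Tz z1 z2 z3 w1 w2 != 0 ->
  rat2tm (mkf Psz Qsz) z1 z2 z3 w1 w2.
Proof.
move=> two hw hT.
have hD := D_neq0 hw.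
have hk : k3*k0 - k2*k1 != 0 by rewrite T_k.
have hR : Res Psz`_0 Psz`_1 Psz`_2 Qsz`_0 Qsz`_1 Qsz`_2 != 0.
  by rewrite /Psz /Qsz !coefP3 /= id_exRes mulf_neq0 // expf_neq0.
exists Psz, Qsz; split => //.
- split => //.
  + exact: res_coprime (size_P3 _ _ _) (size_P3 _ _ _) hR.
  + have [h2|h2] := eqVneq Psz`_2 0.
      have hq2 : Qsz`_2 != 0.
        apply/negP => /eqP hq2; move: hR; rewrite h2 hq2.
        have -> : Res Psz`_0 Psz`_1 0 Qsz`_0 Qsz`_1 0 = 0 by rewrite /Res; ring.
        by rewrite eqxx.
      rewrite (size3 (size_P3 _ _ _) hq2); apply/maxn_idPr; exact: size_P3.
    rewrite (size3 (size_P3 _ _ _) h2); apply/maxn_idPl; exact: size_P3.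
- apply: (@fix_back _ _ _ ((a1 * b2 - b1 * a2)^+3)) => //; first by rewrite expf_neq0.
  have [h0 h1 h2 h3] := id_exF e0 e1 e2 e3 a1 b1 a2 b2.
  rewrite /Psz /Qsz fixpolyE EpolyE P4Z -/x1 -/y1 -/x2 -/y2 -/x3 -/y3 -/e0 -/e1 -/e2 -/e3.
  by rewrite /k0 /k1 /k2 /k3 h0 h1 h2 h3.
- move=> w; rewrite /Psz /Qsz crit3 id_exJ.
  have hc : 2 * (a1*b2 - b1*a2)^+2 * (k3*k0 - k2*k1) != 0 by rewrite !mulf_neq0 // expf_neq0.
  split.
    move/eqP; rewrite mulf_eq0 (negPf hc) /= mulf_eq0 => /orP [/eqP h|/eqP h].
      by left; apply/hdiff_eq0; exact: h.
    by right; apply/hdiff_eq0; exact: h.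
  move=> hw'; apply/eqP; rewrite mulf_eq0; apply/orP; right; rewrite mulf_eq0; apply/orP.
  case: hw' => ->; [left|right]; apply/eqP.
    by have := (proj2 (hdiff_eq0 w1 w1) erefl).
  by have := (proj2 (hdiff_eq0 w2 w2) erefl).
Qed.

End Assembly.

Theorem main_gen : (2 : F) != 0 ->
  (forall (f : sphere F -> sphere F) (z1 z2 z3 w1 w2 : sphere F),
      rat2tm f z1 z2 z3 w1 w2 -> admissible z1 z2 z3 w1 w2) /\
  (forall z1 z2 z3 w1 w2 : sphere F,
      admissible z1 z2 z3 w1 w2 ->
      exists f : sphere F -> sphere F,
        rat2tm f z1 z2 z3 w1 w2 /\
        (forall g : sphere F -> sphere F, rat2tm g z1 z2 z3 w1 w2 -> g = f)).
Proof.
move=> two; split.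
  move=> f z1 z2 z3 w1 w2 [p [q [hrep hcnt hw hcrit]]]; apply/adm_iff; split => //.
  by have [hT _] := analyze hrep hcnt hw hcrit.
move=> z1 z2 z3 w1 w2 /adm_iff [hw hT].
exists (mkf (Psz z1 z2 z3 w1 w2) (Qsz z1 z2 z3 w1 w2)); split; first exact: exist_tm.
move=> g [p [q [hrep hcnt hw' hcrit]]].
have [_ [mu [hmu [hpE hqE]]]] := analyze hrep hcnt hw hcrit.
move: hrep => [_ _ hS hN].
apply: functional_extensionality => -[z|]; rewrite ?hS ?hN /mkf hpE hqE.
  rewrite !hornerZ mulf_eq0 (negPf hmu) /=; case: ifP => // _.
  by rewrite -mulf_div divff // mul1r.
rewrite !coefZ mulf_eq0 (negPf hmu) /=; case: ifP => // _.
by rewrite -mulf_div divff // mul1r.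
Qed.

End Bridge.

Lemma two_neq0 (R : realType) : (2 : R[i]) != 0.
Proof. by rewrite pnatr_eq0. Qed.

Theorem mainTheorem15 (R : realType) :
  (forall (f : sphere R[i] -> sphere R[i]) (z1 z2 z3 w1 w2 : sphere R[i]),
      rat2tm f z1 z2 z3 w1 w2 -> admissible z1 z2 z3 w1 w2) /\
  (forall z1 z2 z3 w1 w2 : sphere R[i],
      admissible z1 z2 z3 w1 w2 ->
      exists f : sphere R[i] -> sphere R[i],
        rat2tm f z1 z2 z3 w1 w2 /\
        (forall g : sphere R[i] -> sphere R[i], rat2tm g z1 z2 z3 w1 w2 -> g = f)).
Proof. exact: (main_gen (two_neq0 R)). Qed.
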